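(* Let $(D(E))$ be a matrix convex set, $D(E)\subseteq\mathcal{B}(E)^k$, which is closed with respect to reducing subspaces, and let $F:D(E)\to\mathcal{B}(E)$ be a free function. Then the real hypograph $\mathrm{hypo}_{\mathrm{Re}}(F)$ is a matrix convex set if and only if $F$ is real operator concave.
   Context: $\mathcal{B}(E)$: bounded operators on a Hilbert space $E$; $\Re X=(X+X^* )/2$; $X\geq_{\mathrm{Re}}0$ means $\Re X\geq 0$ (entrywise for tuples); $A\leq_{\mathrm{Re}}B$ means $B-A\geq_{\mathrm{Re}}0$. For a tuple $X$ and a linear map $U$, $U^*XU:=(U^*X_1U,\dots,U^*X_kU)$. A graded collection $C=(C(E))$ with $C(E)\subseteq\mathcal{B}(E)^m$ for all Hilbert spaces $E$ is a free set if $U^*C(E)U\subseteq C(K)$ for every unitary $U:K\to E$ and $C(E)\oplus C(K)\subseteq C(E\oplus K)$; it is matrix convex if moreover $V^*C(E)V\subseteq C(K)$ for every linear isometry $V:K\to E$. $C$ is closed with respect to reducing subspaces if whenever $X\in C(K)$ and $N\subseteq K$ is a closed subspace invariant under all $X_i$ (equivalently, with $X=\hat X\oplus\overline X$ relative to $K=N\oplus N^\perp$, as used here), the tuple of restrictions $\hat X=(X_1|_N,\dots,X_m|_N)$ lies in $C(N)$. A free function $F:D(E)\to\mathcal{B}(E)$ satisfies $F(U^*A_1U,\dots,U^*A_kU)=U^*F(A)U$ for unitaries $U$ and $F(A_1\oplus B_1,\dots,A_k\oplus B_k)=F(A)\oplus F(B)$. It is real operator concave if $(1-\lambda)F(A)+\lambda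 F(B)\leq_{\mathrm{Re}}F((1-\lambda)A+\lambda B)$ for all $E$, $A,B\in D(E)$, $\lambda\in[0,1]$. The real hypograph is the graded collection $\mathrm{hypo}_{\mathrm{Re}}(F)(K)=\{(Y,X)\in\mathcal{B}(K)\times D(K): Y\leq_{\mathrm{Re}}F(X)\}$, viewed as a collection of $(k+1)$-tuples. *)

(* Defs.v *)
From Stdlib Require Import Reals.
Require Stdlib.Vectors.Fin.
Open Scope R_scope.

Record Cplx := mkC { re : R ; im : R }.
Definition C0 : Cplx := mkC 0 0.
Definition C1 : Cplx := mkC 1 0.
Definition RtoC (r : R) : Cplx := mkC r 0.
Definition Cadd (a b : Cplx) : Cplx := mkC (re a + re b) (im a + im b).
Definition Cmul (a b : Cplx) : Cplx :=
  mkC (re a * re b - im a * im b) (re a * im b + im a * re b).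
Definition Cconj (a : Cplx) : Cplx := mkC (re a) (- im a).

Record Hilbert := {
  hcar :> Type;
  hzero : hcar;
  hadd : hcar -> hcar -> hcar;
  hopp : hcar -> hcar;
  hscal : Cplx -> hcar -> hcar;
  hinner : hcar -> hcar -> Cplx;
  haddA : forall x y z, hadd x (hadd y z) = hadd (hadd x y) z;
  haddC : forall x y, hadd x y = hadd y x;
  hadd0 : forall x, hadd x hzero = x;
  haddN : forall x, hadd x (hopp x) = hzero;
  hscalA : forall a b x, hscal a (hscal b x) = hscal (Cmul a b) x;
  hscal1 : forall x, hscal C1 x = x;
  hscalDr : forall a x y, hscal a (hadd x y) = hadd (hscal a x) (hscal a y);
  hscalDl : forall a b x, hscal (Cadd a b) x = hadd (hscal a x) (hscal b x);
  hinnerDl : forall x y z, hinner (hadd x y) z = Cadd (hinner x z) (hinner y z);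
  hinnerZl : forall a x y, hinner (hscal a x) y = Cmul a (hinner x y);
  hinner_sym : forall x y, hinner y x = Cconj (hinner x y);
  hinner_pos : forall x, 0 <= re (hinner x x);
  hinner_def : forall x, hinner x x = C0 -> x = hzero;
  hcomplete : forall u : nat -> hcar,
    (forall eps, 0 < eps -> exists N, forall n m, (N <= n)%nat -> (N <= m)%nat ->
        sqrt (re (hinner (hadd (u n) (hopp (u m))) (hadd (u n) (hopp (u m))))) < eps) ->
    exists l, forall eps, 0 < eps -> exists N, forall n, (N <= n)%nat ->
        sqrt (re (hinner (hadd (u n) (hopp l)) (hadd (u n) (hopp l)))) < eps
}.
Arguments hzero {h}.
Arguments hadd {h} _ _.
Arguments hopp {h} _.
Arguments hscal {h} _ _.
Arguments hinner {h} _ _.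

Definition hnorm {E : Hilbert} (x : E) : R := sqrt (re (hinner x x)).

Record BL (E K : Hilbert) := {
  bapp :> E -> K;
  bapp_add : forall x y, bapp (hadd x y) = hadd (bapp x) (bapp y);
  bapp_scal : forall a x, bapp (hscal a x) = hscal a (bapp x);
  bapp_bounded : exists M, forall x, hnorm (bapp x) <= M * hnorm x
}.
Arguments bapp {E K} _ _.

Definition tuple (m : nat) (E : Hilbert) := Fin.t m -> BL E E.

Definition graded (m : nat) := forall E : Hilbert, tuple m E -> Prop.

Definition isometry {K E : Hilbert} (V : BL K E) : Prop :=
  forall x y, hinner (V x) (V y) = hinner x y.
Definition unitary {K E : Hilbert} (U : BL K E) : Prop :=
  isometry U /\ forall y : E, exists x : K, U x = y.

(** T = compression of X by V  (characterised by <T k, k'> = <X V k, V k'>, i.e. the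
    defining property of the adjoint of V) *)
Definition compress {m} {K E : Hilbert} (V : BL K E) (X : tuple m E) (T : tuple m K)
  : Prop :=
  forall l (k k' : K), hinner (T l k) k' = hinner (X l (V k)) (V k').

Definition compress_op {K E : Hilbert} (V : BL K E) (X : BL E E) (T : BL K K) : Prop :=
  forall (k k' : K), hinner (T k) k' = hinner (X (V k)) (V k').

(** G = E ⊕ K via isometric embeddings i, j with orthogonal ranges spanning G *)
Definition is_dsum {E K G : Hilbert} (i : BL E G) (j : BL K G) : Prop :=
  isometry i /\ isometry j /\
  (forall e k, hinner (i e) (j k) = C0) /\
  (forall g : G, exists e k, g = hadd (i e) (j k)).

Definition dsum_op {E K G : Hilbert} (i : BL E G) (j : BL K G)
  (X : BL E E) (Y : BL K K) (T : BL G G) : Prop :=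
  forall e k, T (hadd (i e) (j k)) = hadd (i (X e)) (j (Y k)).

Definition dsum_tuple {m} {E K G : Hilbert} (i : BL E G) (j : BL K G)
  (X : tuple m E) (Y : tuple m K) (T : tuple m G) : Prop :=
  forall l, dsum_op i j (X l) (Y l) (T l).

Definition free_set {m} (C : graded m) : Prop :=
  (forall (E K : Hilbert) (U : BL K E), unitary U ->
     forall X T, C E X -> compress U X T -> C K T) /\
  (forall (E K G : Hilbert) (i : BL E G) (j : BL K G), is_dsum i j ->
     forall X Y T, C E X -> C K Y -> dsum_tuple i j X Y T -> C G T).

Definition matrix_convex {m} (C : graded m) : Prop :=
  free_set C /\
  (forall (E K : Hilbert) (V : BL K E), isometry V ->
     forall X T, C E X -> compress V X T -> C K T).

(** Closedness w.r.t. reducing subspaces: the closed subspace N of K is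
    given as the range of an isometry V : N -> K; it is invariant under all
    X_l, and so is its orthogonal complement (X = X^ ⊕ X-bar); the tuple of
    restrictions X^ must lie in C(N). *)
Definition closed_reducing {m} (C : graded m) : Prop :=
  forall (K N : Hilbert) (V : BL N K), isometry V ->
  forall X, C K X ->
  (forall l (n : N), exists n' : N, X l (V n) = V n') ->
  (forall l (k : K), (forall n : N, hinner k (V n) = C0) ->
       forall n : N, hinner (X l k) (V n) = C0) ->
  forall T : tuple m N, (forall l n, V (T l n) = X l (V n)) -> C N T.

(** Real-part order: A <=_Re B iff Re(B - A) >= 0, i.e.
    <Re(B-A) x, x> = Re <(B-A)x, x> >= 0 for all x. *)
Definition le_Re {E : Hilbert} (A B : BL E E) : Prop :=
  forall x : E, re (hinner (A x) x) <= re (hinner (B x) x).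

(** Free functions on D (only values on D(E) matter) *)
Definition free_function {k} (D : graded k) (F : forall E : Hilbert, tuple k E -> BL E E)
  : Prop :=
  (forall (E K : Hilbert) (U : BL K E), unitary U ->
     forall A T, D E A -> compress U A T -> compress_op U (F E A) (F K T)) /\
  (forall (E K G : Hilbert) (i : BL E G) (j : BL K G), is_dsum i j ->
     forall A B T, D E A -> D K B -> dsum_tuple i j A B T ->
       dsum_op i j (F E A) (F K B) (F G T)).

Definition real_operator_concave {k} (D : graded k)
  (F : forall E : Hilbert, tuple k E -> BL E E) : Prop :=
  forall (E : Hilbert) (A B : tuple k E) (lam : R), 0 <= lam <= 1 ->
  D E A -> D E B ->
  forall T : tuple k E,
    (forall l x, T l x = hadd (hscal (RtoC (1 - lam)) (A l x)) (hscal (RtoC lam) (B l x))) ->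
  forall S : BL E E,
    (forall x, S x = hadd (hscal (RtoC (1 - lam)) (F E A x)) (hscal (RtoC lam) (F E B x))) ->
  le_Re S (F E T).

(** Real hypograph, as a graded collection of (k+1)-tuples (Y, X) *)
Definition hypo_Re {k} (D : graded k) (F : forall E : Hilbert, tuple k E -> BL E E)
  : graded (S k) :=
  fun E Z => D E (fun l => Z (Fin.FS l)) /\ le_Re (Z Fin.F1) (F E (fun l => Z (Fin.FS l))).

(* Main.v *)
Require Import Defs.
From Stdlib Require Import Reals Lra Psatz Lia ClassicalEpsilon Classical.
Open Scope R_scope.

Lemma Ceq (a b : Cplx) : re a = re b -> im a = im b -> a = b.
Proof. destruct a, b; simpl; intros; subst; reflexivity. Qed.

Section HAlg.
Context {E : Hilbert}.

Lemma hinner_0l (y : E) : hinner hzero y = C0.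
Proof.
  pose proof (hinnerDl E hzero hzero y) as H. rewrite hadd0 in H.
  destruct (hinner hzero y) as [a b]. unfold Cadd in H; simpl in H.
  injection H; intros; apply Ceq; simpl; lra.
Qed.

Lemma hinner_oppl (x y : E) : hinner (hopp x) y = mkC (- re (hinner x y)) (- im (hinner x y)).
Proof.
  pose proof (hinnerDl E x (hopp x) y) as H. rewrite haddN, hinner_0l in H.
  destruct (hinner (hopp x) y) as [a b]. destruct (hinner x y) as [c d].
  unfold Cadd, C0 in H; simpl in H. injection H; intros. apply Ceq; simpl; lra.
Qed.

Lemma vec_ext (x y : E) : (forall z, hinner x z = hinner y z) -> x = y.
Proof.
  intros H. set (z := hadd x (hopp y)).
  assert (Hz : hinner z z = C0).
  { unfold z at 1. rewrite hinnerDl, hinner_oppl, H. apply Ceq; simpl; lra. }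
  apply hinner_def in Hz. unfold z in Hz.
  rewrite <- (hadd0 E x), <- (haddN E y), (haddC E y), haddA, Hz, haddC, hadd0. reflexivity.
Qed.

Lemma conj_sym (x y : E) : Cconj (hinner y x) = hinner x y.
Proof. rewrite hinner_sym. destruct (hinner x y); unfold Cconj; simpl. apply Ceq; simpl; lra. Qed.

Lemma hinner_addr (x y z : E) : hinner x (hadd y z) = Cadd (hinner x y) (hinner x z).
Proof. rewrite (hinner_sym _ (hadd y z) x), hinnerDl, (hinner_sym _ x y), (hinner_sym _ x z).
  destruct (hinner y x), (hinner z x). apply Ceq; simpl; lra. Qed.

Lemma hinner_scalr (c : Cplx) (x y : E) : hinner x (hscal c y) = Cmul (Cconj c) (hinner x y).
Proof. rewrite (hinner_sym _ (hscal c y) x), hinnerZl, (hinner_sym _ x y).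
  destruct c, (hinner y x); apply Ceq; simpl; ring. Qed.

Lemma hinner_oppr (x y : E) : hinner x (hopp y) = mkC (- re (hinner x y)) (- im (hinner x y)).
Proof. rewrite (hinner_sym _ (hopp y) x), hinner_oppl, (hinner_sym _ x y). destruct (hinner y x); apply Ceq; simpl; ring. Qed.

Lemma hinner_0r (y : E) : hinner y hzero = C0.
Proof. rewrite (hinner_sym _ hzero y), hinner_0l. apply Ceq; simpl; ring. Qed.

Lemma im_self (x : E) : im (hinner x x) = 0.
Proof. pose proof (hinner_sym E x x) as H. destruct (hinner x x) as [a b]. unfold Cconj in H. simpl in *. injection H. lra. Qed.

Lemma re_sym (x y : E) : re (hinner y x) = re (hinner x y).
Proof. rewrite hinner_sym. reflexivity. Qed.

End HAlg.

Ltac vnorm := repeat first [rewrite hinnerDl | rewrite hinnerZl | rewrite hinner_oppl | rewrite hinner_0l].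
Ltac vext := apply vec_ext; intro; vnorm; apply Ceq; simpl; first [ring | field].

Lemma bl_zero {E K : Hilbert} (f : BL E K) : f hzero = hzero.
Proof.
  pose proof (bapp_add E K f hzero hzero) as H. rewrite hadd0 in H.
  apply vec_ext; intro z. pose proof (f_equal (fun v => hinner v z) H) as H'. simpl in H'.
  rewrite hinnerDl in H'. rewrite hinner_0l. destruct (hinner (f hzero) z) as [a b].
  unfold Cadd in H'; simpl in H'. injection H'; intros; apply Ceq; simpl; lra.
Qed.

Lemma bl_opp {E K : Hilbert} (f : BL E K) (x : E) : f (hopp x) = hopp (f x).
Proof.
  assert (H : hadd (f (hopp x)) (f x) = hzero).
  { rewrite <- bapp_add, haddC, haddN. apply bl_zero. }
  apply vec_ext; intro z. pose proof (f_equal (fun v => hinner v z) H) as H'. simpl in H'.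
  rewrite hinnerDl, hinner_0l in H'. rewrite hinner_oppl.
  destruct (hinner (f (hopp x)) z) as [a b]. destruct (hinner (f x) z) as [c d].
  unfold Cadd, C0 in H'; simpl in H'. injection H'; intros; apply Ceq; simpl; lra.
Qed.

Ltac blnorm := repeat first [rewrite bapp_add | rewrite bapp_scal | rewrite bl_opp | rewrite bl_zero].

Definition hn2 {E : Hilbert} (x : E) := re (hinner x x).

Lemma hn2_scal {E : Hilbert} (c : Cplx) (x : E) :
  hn2 (hscal c x) = (re c * re c + im c * im c) * hn2 x.
Proof. unfold hn2. rewrite hinnerZl, hinner_scalr. pose proof (im_self x).
  destruct c; simpl. nra. Qed.

Lemma hn2_add {E : Hilbert} (x y : E) : hn2 (hadd x y) = hn2 x + hn2 y + 2 * re (hinner x y).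
Proof. unfold hn2. rewrite hinnerDl, !hinner_addr. simpl. rewrite (re_sym x y). ring. Qed.

Lemma hn2_ge0 {E : Hilbert} (x : E) : 0 <= hn2 x.
Proof. apply hinner_pos. Qed.

Lemma hn2_addsc {E : Hilbert} (x y : E) (r : R) :
  hn2 (hadd x (hscal (RtoC r) y)) = hn2 x + 2 * r * re (hinner x y) + r * r * hn2 y.
Proof. rewrite hn2_add, hn2_scal, hinner_scalr. simpl. ring. Qed.

Lemma hn2_add_le {E : Hilbert} (x y : E) : hn2 (hadd x y) <= 2 * hn2 x + 2 * hn2 y.
Proof.
  pose proof (hn2_addsc x y (-1)) as H. pose proof (hn2_ge0 (hadd x (hscal (RtoC (-1)) y))).
  rewrite hn2_add. lra.
Qed.

Lemma hn2_add_le_t {E : Hilbert} (x y : E) (t : R) : 0 < t ->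
  hn2 (hadd x y) <= (1 + t) * hn2 x + (1 + / t) * hn2 y.
Proof.
  intros Ht. pose proof (hn2_ge0 (hadd (hscal (RtoC t) x) (hscal (RtoC (-1)) y))) as H.
  rewrite hn2_addsc, hn2_scal, hinnerZl in H. simpl in H. rewrite hn2_add.
  assert (2 * re (hinner x y) <= t * hn2 x + / t * hn2 y).
  { apply Rmult_le_reg_l with t; auto.
    replace (t * (t * hn2 x + / t * hn2 y)) with (t * t * hn2 x + hn2 y) by (field; lra). nra. }
  lra.
Qed.

Lemma sqrt_add_le (a b : R) : 0 <= a -> 0 <= b -> sqrt (a + b) <= sqrt a + sqrt b.
Proof.
  intros Ha Hb. pose proof (sqrt_pos a). pose proof (sqrt_pos b).
  rewrite <- (sqrt_square (sqrt a + sqrt b)) by lra. apply sqrt_le_1_alt.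
  rewrite <- (sqrt_sqrt a) at 1 by lra. rewrite <- (sqrt_sqrt b) at 1 by lra. nra.
Qed.

Section DSum.
Variables E K : Hilbert.
Definition dcar := (E * K)%type.
Definition dzero : dcar := (hzero, hzero).
Definition dadd (p q : dcar) : dcar := (hadd (fst p) (fst q), hadd (snd p) (snd q)).
Definition dopp (p : dcar) : dcar := (hopp (fst p), hopp (snd p)).
Definition dscal c (p:dcar) : dcar := (hscal c (fst p), hscal c (snd p)).
Definition dinner (p q : dcar) : Cplx := Cadd (hinner (fst p) (fst q)) (hinner (snd p) (snd q)).

Lemma d_addA x y z : dadd x (dadd y z) = dadd (dadd x y) z.
Proof. unfold dadd; simpl; rewrite !haddA; reflexivity. Qed.
Lemma d_addC x y : dadd x y = dadd y x.
Proof. unfold dadd; rewrite (haddC E (fst x)), (haddC K (snd x)); reflexivity. Qed.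
Lemma d_add0 x : dadd x dzero = x.
Proof. destruct x; unfold dadd; simpl; rewrite !hadd0; reflexivity. Qed.
Lemma d_addN x : dadd x (dopp x) = dzero.
Proof. unfold dadd; simpl; rewrite !haddN; reflexivity. Qed.
Lemma d_scalA a b x : dscal a (dscal b x) = dscal (Cmul a b) x.
Proof. unfold dscal; simpl; rewrite !hscalA; reflexivity. Qed.
Lemma d_scal1 x : dscal Defs.C1 x = x.
Proof. destruct x; unfold dscal; simpl; rewrite !hscal1; reflexivity. Qed.
Lemma d_scalDr a x y : dscal a (dadd x y) = dadd (dscal a x) (dscal a y).
Proof. unfold dscal, dadd; simpl; rewrite !hscalDr; reflexivity. Qed.
Lemma d_scalDl a b x : dscal (Cadd a b) x = dadd (dscal a x) (dscal b x).
Proof. unfold dscal, dadd; simpl; rewrite !hscalDl; reflexivity. Qed.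
Lemma d_innerDl x y z : dinner (dadd x y) z = Cadd (dinner x z) (dinner y z).
Proof. unfold dinner, dadd; simpl; rewrite !hinnerDl. apply Ceq; simpl; ring. Qed.
Lemma d_innerZl a x y : dinner (dscal a x) y = Cmul a (dinner x y).
Proof. unfold dinner, dscal; simpl; rewrite !hinnerZl. apply Ceq; simpl; ring. Qed.
Lemma d_inner_sym x y : dinner y x = Cconj (dinner x y).
Proof. unfold dinner; rewrite (hinner_sym E (fst x)), (hinner_sym K (snd x)).
  apply Ceq; simpl; ring. Qed.
Lemma d_inner_pos x : 0 <= re (dinner x x).
Proof. unfold dinner; simpl. pose proof (hinner_pos E (fst x)). pose proof (hinner_pos K (snd x)). lra. Qed.
Lemma d_inner_def x : dinner x x = C0 -> x = dzero.
Proof.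
  destruct x as [a b]; unfold dinner; simpl. intros H.
  pose proof (hinner_pos E a). pose proof (hinner_pos K b).
  pose proof (im_self a). pose proof (im_self b).
  assert (re (hinner a a) + re (hinner b b) = 0) by (apply (f_equal re) in H; exact H).
  unfold dzero; f_equal; apply hinner_def; apply Ceq; simpl; lra.
Qed.

Lemma d_complete : forall u : nat -> dcar,
    (forall eps, 0 < eps -> exists N, forall n m, (N <= n)%nat -> (N <= m)%nat ->
        sqrt (re (dinner (dadd (u n) (dopp (u m))) (dadd (u n) (dopp (u m))))) < eps) ->
    exists l, forall eps, 0 < eps -> exists N, forall n, (N <= n)%nat ->
        sqrt (re (dinner (dadd (u n) (dopp l)) (dadd (u n) (dopp l)))) < eps.
Proof.
  intros u Hc.
  destruct (hcomplete E (fun n => fst (u n))) as [l1 Hl1].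
  { intros eps He. destruct (Hc eps He) as [N HN]. exists N. intros n m Hn Hm.
    specialize (HN n m Hn Hm). unfold dinner, dadd, dopp in HN; simpl in HN.
    eapply Rle_lt_trans; [|exact HN]. apply sqrt_le_1_alt.
    pose proof (hinner_pos K (hadd (snd (u n)) (hopp (snd (u m))))). lra. }
  destruct (hcomplete K (fun n => snd (u n))) as [l2 Hl2].
  { intros eps He. destruct (Hc eps He) as [N HN]. exists N. intros n m Hn Hm.
    specialize (HN n m Hn Hm). unfold dinner, dadd, dopp in HN; simpl in HN.
    eapply Rle_lt_trans; [|exact HN]. apply sqrt_le_1_alt.
    pose proof (hinner_pos E (hadd (fst (u n)) (hopp (fst (u m))))). lra. }
  exists (l1, l2). intros eps He.
  destruct (Hl1 (eps/2)) as [N1 HN1]; [lra|]. destruct (Hl2 (eps/2)) as [N2 HN2]; [lra|].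
  exists (Nat.max N1 N2). intros n Hn.
  specialize (HN1 n ltac:(lia)). specialize (HN2 n ltac:(lia)).
  unfold dinner, dadd, dopp; simpl.
  eapply Rle_lt_trans; [apply sqrt_add_le; apply hinner_pos|]. simpl in HN1, HN2. lra.
Qed.

Definition dsumH : Hilbert :=
  Build_Hilbert dcar dzero dadd dopp dscal dinner d_addA d_addC d_add0 d_addN
    d_scalA d_scal1 d_scalDr d_scalDl d_innerDl d_innerZl d_inner_sym d_inner_pos
    d_inner_def d_complete.
End DSum.

Lemma mkbound {E K : Hilbert} (f : E -> K) (M : R) : 0 <= M ->
  (forall x, hn2 (f x) <= M * hn2 x) -> exists M', forall x, hnorm (f x) <= M' * hnorm x.
Proof.
  intros HM H. exists (sqrt M). intros x. unfold hnorm.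
  rewrite <- sqrt_mult by (auto; apply hn2_ge0). apply sqrt_le_1_alt. apply H.
Qed.

Lemma bl_sq {E K : Hilbert} (f : BL E K) : exists M, 0 <= M /\ forall x, hn2 (f x) <= M * hn2 x.
Proof.
  destruct (bapp_bounded E K f) as [M0 H]. exists (Rmax M0 0 * Rmax M0 0). split; [nra|].
  intros x. specialize (H x). unfold hnorm in H.
  pose proof (sqrt_pos (re (hinner x x))). pose proof (sqrt_pos (re (hinner (f x) (f x)))).
  assert (Hs1 : sqrt (re (hinner (f x) (f x))) <= Rmax M0 0 * sqrt (re (hinner x x))).
  { eapply Rle_trans; [exact H|]. apply Rmult_le_compat_r; auto. apply Rmax_l. }
  assert (Hm : 0 <= Rmax M0 0) by apply Rmax_r.
  unfold hn2. pose proof (sqrt_sqrt (re (hinner (f x) (f x))) (hinner_pos _ _)).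
  pose proof (sqrt_sqrt (re (hinner x x)) (hinner_pos _ _)).
  assert (0 <= Rmax M0 0 * sqrt (re (hinner x x))) by nra.
  nra.
Qed.

Lemma hscal_zero {E : Hilbert} (c : Cplx) : hscal c (@hzero E) = hzero.
Proof. vext. Qed.
Lemma hadd_zero {E : Hilbert} : hadd (@hzero E) hzero = hzero.
Proof. apply hadd0. Qed.
Lemma hopp_add {E : Hilbert} (x y : E) : hopp (hadd x y) = hadd (hopp x) (hopp y).
Proof. vext. Qed.
Lemma hopp_scal {E : Hilbert} c (x : E) : hopp (hscal c x) = hscal c (hopp x).
Proof. vext. Qed.

Definition idB (E : Hilbert) : BL E E.
Proof.
  refine (Build_BL E E (fun x => x) _ _ _); try reflexivity.
  apply (mkbound _ 1); [lra|]. intros; lra.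
Defined.

Definition zeroB (E K : Hilbert) : BL E K.
Proof.
  refine (Build_BL E K (fun _ => hzero) _ _ _).
  - intros; symmetry; apply hadd0.
  - intros; symmetry; apply hscal_zero.
  - apply (mkbound _ 0); [lra|]. intros; unfold hn2; rewrite hinner_0l; simpl; lra.
Defined.

Definition oppB (E : Hilbert) : BL E E.
Proof.
  refine (Build_BL E E (fun x => hopp x) _ _ _).
  - intros; apply hopp_add.
  - intros; apply hopp_scal.
  - apply (mkbound _ 1); [lra|]. intros; unfold hn2; rewrite hinner_oppl, hinner_oppr; simpl; lra.
Defined.

Definition compB {E K G : Hilbert} (g : BL K G) (f : BL E K) : BL E G.
Proof.
  refine (Build_BL E G (fun x => g (f x)) _ _ _).
  - intros; rewrite !bapp_add; reflexivity.
  - intros; rewrite !bapp_scal; reflexivity.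
  - destruct (bl_sq g) as [Mg [Hg0 Hg]]. destruct (bl_sq f) as [Mf [Hf0 Hf]].
    apply (mkbound _ (Mg * Mf)); [nra|]. intros x.
    eapply Rle_trans; [apply Hg|]. specialize (Hf x). nra.
Defined.

Definition lincombB {E K : Hilbert} (a : R) (A : BL E K) (b : R) (B : BL E K) : BL E K.
Proof.
  refine (Build_BL E K (fun x => hadd (hscal (RtoC a) (A x)) (hscal (RtoC b) (B x))) _ _ _).
  - intros; blnorm; vext.
  - intros; blnorm; vext.
  - destruct (bl_sq A) as [MA [HA0 HA]]. destruct (bl_sq B) as [MB [HB0 HB]].
    apply (mkbound _ (2 * (a*a) * MA + 2 * (b*b) * MB)); [nra|]. intros x.
    eapply Rle_trans; [apply hn2_add_le|]. rewrite !hn2_scal. simpl.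
    specialize (HA x). specialize (HB x). pose proof (hn2_ge0 x).
    pose proof (hn2_ge0 (A x)). pose proof (hn2_ge0 (B x)). nra.
Defined.

Lemma hn2_pair {E K : Hilbert} (p : dsumH E K) : hn2 p = hn2 (fst p) + hn2 (snd p).
Proof. reflexivity. Qed.

Definition inlB (E K : Hilbert) : BL E (dsumH E K).
Proof.
  refine (Build_BL E (dsumH E K) (fun e => (e, hzero)) _ _ _).
  - intros; simpl; unfold dadd; simpl; rewrite hadd0; reflexivity.
  - intros; simpl; unfold dscal; simpl; rewrite hscal_zero; reflexivity.
  - apply (mkbound _ 1); [lra|]. intros x; rewrite hn2_pair; simpl. unfold hn2 at 2; rewrite hinner_0l; simpl; lra.
Defined.

Definition inrB (E K : Hilbert) : BL K (dsumH E K).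
Proof.
  refine (Build_BL K (dsumH E K) (fun k => (hzero, k)) _ _ _).
  - intros; simpl; unfold dadd; simpl; rewrite hadd0; reflexivity.
  - intros; simpl; unfold dscal; simpl; rewrite hscal_zero; reflexivity.
  - apply (mkbound _ 1); [lra|]. intros x; rewrite hn2_pair; simpl. unfold hn2 at 1; rewrite hinner_0l; simpl; lra.
Defined.

Definition blkB {E1 K1 E2 K2 : Hilbert} (A : BL E1 E2) (B : BL K1 E2) (C : BL E1 K2) (D : BL K1 K2)
  : BL (dsumH E1 K1) (dsumH E2 K2).
Proof.
  refine (Build_BL (dsumH E1 K1) (dsumH E2 K2)
    (fun p => (hadd (A (fst p)) (B (snd p)), hadd (C (fst p)) (D (snd p)))) _ _ _).
  - intros [a b] [c d]; simpl; unfold dadd; simpl. blnorm. f_equal; vext.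
  - intros z [a b]; simpl; unfold dscal; simpl. blnorm. f_equal; vext.
  - destruct (bl_sq A) as [MA [HA0 HA]]. destruct (bl_sq B) as [MB [HB0 HB]].
    destruct (bl_sq C) as [MC [HC0 HC]]. destruct (bl_sq D) as [MD [HD0 HD]].
    apply (mkbound _ (2 * (MA + MB + MC + MD))); [nra|]. intros [a b].
    rewrite !hn2_pair; simpl.
    pose proof (hn2_add_le (A a) (B b)). pose proof (hn2_add_le (C a) (D b)).
    specialize (HA a). specialize (HB b). specialize (HC a). specialize (HD b).
    pose proof (hn2_ge0 a). pose proof (hn2_ge0 b). nra.
Defined.

Lemma parallelogram {E : Hilbert} (x y : E) :
  hn2 (hadd x y) + hn2 (hadd x (hopp y)) = 2 * hn2 x + 2 * hn2 y.
Proof. rewrite !hn2_add. unfold hn2. rewrite hinner_oppr, !hinner_oppl, hinner_oppr. simpl. ring. Qed.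

Lemma quad_zero (b c : R) : 0 <= c -> (forall s, 0 <= - 2 * s * b + s * s * c) -> b = 0.
Proof.
  intros Hc H. specialize (H (b / (c + 1))).
  assert (Hp : 0 < c + 1) by lra.
  replace (- 2 * (b / (c + 1)) * b + b / (c + 1) * (b / (c + 1)) * c)
    with (- (b * b) * (c + 2) / ((c + 1) * (c + 1))) in H by (field; lra).
  assert (0 <= - (b * b) * (c + 2)).
  { apply Rmult_le_reg_r with (/ ((c+1)*(c+1))).
    apply Rinv_0_lt_compat; nra. rewrite Rmult_0_l. exact H. }
  nra.
Qed.

Lemma inv_small (eps : R) : 0 < eps -> exists N : nat, forall n, (N <= n)%nat -> / (INR n + 1) < eps.
Proof.
  intros He. destruct (INR_unbounded (/ eps)) as [N HN]. exists N. intros n Hn.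
  apply le_INR in Hn. rewrite <- (Rinv_inv eps). apply Rinv_lt_contravar.
  - apply Rmult_lt_0_compat; [apply Rinv_0_lt_compat; lra | pose proof (pos_INR n); lra].
  - lra.
Qed.

Section Adj.
Variables (K E : Hilbert) (V : BL K E).
Hypothesis HV : isometry V.

Lemma hn2_V (x : K) : hn2 (V x) = hn2 x.
Proof. unfold hn2. rewrite HV. reflexivity. Qed.

Definition fdist (e : E) (k : K) := hn2 (hadd e (hopp (V k))).

Lemma proj_exists (e : E) : exists l : K, forall k', hinner l k' = hinner e (V k').
Proof.
  set (S := fun r => exists k, r = - fdist e k).
  destruct (completeness S) as [m [Hub Hlub]].
  { exists 0. intros r [k ->]. pose proof (hn2_ge0 (hadd e (hopp (V k)))). unfold fdist. lra. }
  { exists (- fdist e hzero). exists hzero. reflexivity. }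
  set (d := - m).
  assert (Hd1 : forall k, d <= fdist e k).
  { intros k. assert (- fdist e k <= m) by (apply Hub; exists k; reflexivity). unfold d; lra. }
  assert (Hd2 : forall eps, 0 < eps -> exists k, fdist e k < d + eps).
  { intros eps He. apply NNPP. intros Hn.
    assert (m <= m - eps); [|lra].
    apply Hlub. intros r [k ->]. assert (~ fdist e k < d + eps) by (intro; apply Hn; eauto).
    unfold d in *; lra. }
  assert (Hseq : forall n : nat, exists k, fdist e k < d + / (INR n + 1)).
  { intros n. apply Hd2. apply Rinv_0_lt_compat. pose proof (pos_INR n). lra. }
  set (ks := fun n => proj1_sig (constructive_indefinite_description _ (Hseq n))).
  assert (Hks : forall n, fdist e (ks n) < d + / (INR n + 1)).
  { intros n. unfold ks. destruct (constructive_indefinite_description _ (Hseq n)); simpl; auto. }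
  assert (Hc : forall n m, hn2 (hadd (ks n) (hopp (ks m))) <= 2 * / (INR n + 1) + 2 * / (INR m + 1)).
  { intros n m0.
    set (a := hadd e (hopp (V (ks n)))). set (b := hadd e (hopp (V (ks m0)))).
    pose proof (parallelogram b a) as Hp.
    assert (E1 : hadd b a = hscal (RtoC 2) (hadd e (hopp (V (hscal (RtoC (/2)) (hadd (ks n) (ks m0))))))).
    { unfold a, b. blnorm. vext. }
    assert (E2 : hadd b (hopp a) = V (hadd (ks n) (hopp (ks m0)))).
    { unfold a, b. blnorm. vext. }
    rewrite E1, E2, hn2_scal, hn2_V in Hp. simpl in Hp.
    pose proof (Hd1 (hscal (RtoC (/2)) (hadd (ks n) (ks m0)))). unfold fdist in *.
    pose proof (Hks n). pose proof (Hks m0). fold a in H0. fold b in H1. unfold fdist in H0, H1. fold a b in H0, H1. lra. }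
  destruct (hcomplete K ks) as [l Hl].
  { intros eps He. destruct (inv_small (eps * eps / 4)) as [N HN]; [nra|].
    exists N. intros n m0 Hn Hm. specialize (Hc n m0).
    specialize (HN n Hn) as H1. specialize (HN m0 Hm) as H2.
    rewrite <- (sqrt_square eps) by lra. apply sqrt_lt_1_alt. split; [apply hn2_ge0|].
    unfold hn2 in Hc. lra. }
  set (w := hadd e (hopp (V l))).
  assert (Hfl : hn2 w <= d).
  { apply Rnot_lt_le. intros Hlt.
    set (ep := Rmin (1/2) ((hn2 w - d) / 10)).
    assert (Hep : 0 < ep <= 1/2) by (unfold ep; split; [apply Rmin_glb_lt; lra | apply Rmin_l]).
    assert (Hep2 : ep <= (hn2 w - d) / 10) by apply Rmin_r.
    assert (Hd0 : 0 <= d).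
    { assert (m <= 0); [|unfold d; lra]. apply Hlub. intros r [k ->].
      pose proof (hn2_ge0 (hadd e (hopp (V k)))). unfold fdist. lra. }
    set (t := ep / (d + 1)).
    assert (Ht : 0 < t) by (unfold t; apply Rdiv_lt_0_compat; lra).
    assert (Htd : t * (d + 1) = ep) by (unfold t; field; lra).
    destruct (inv_small ep) as [N1 HN1]; [lra|].
    destruct (Hl (sqrt (t * ep))) as [N2 HN2]; [apply sqrt_lt_R0; nra|].
    set (n := Nat.max N1 N2).
    specialize (HN1 n ltac:(unfold n; lia)). specialize (HN2 n ltac:(unfold n; lia)).
    apply sqrt_lt_0_alt in HN2.
    assert (Ew : w = hadd (hadd e (hopp (V (ks n)))) (V (hadd (ks n) (hopp l)))).
    { unfold w. blnorm. vext. }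
    pose proof (hn2_add_le_t (hadd e (hopp (V (ks n)))) (V (hadd (ks n) (hopp l))) t Ht) as Hb.
    rewrite <- Ew, hn2_V in Hb. specialize (Hks n). unfold fdist in Hks. unfold hn2 at 3 in Hb.
    assert (Hit : / t * t = 1) by (field; lra).
    assert (Hinv : 0 < / t) by (apply Rinv_0_lt_compat; lra).
    pose proof (hn2_ge0 (hadd e (hopp (V (ks n))))).
    assert (Hq : (1 + / t) * re (hinner (hadd (ks n) (hopp l)) (hadd (ks n) (hopp l))) <= (1 + / t) * (t * ep)).
    { apply Rmult_le_compat_l; lra. }
    assert (Hq2 : (1 + t) * hn2 (hadd e (hopp (V (ks n)))) <= (1 + t) * (d + ep)) by (apply Rmult_le_compat_l; lra).
    assert (Hq3 : (1 + / t) * (t * ep) = t * ep + ep) by (field; lra).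
    assert (t <= 1/2) by (unfold t; apply Rmult_le_reg_r with (d+1); [lra|]; field_simplify; nra).
    nra. }
  assert (Hw : hn2 w = d) by (apply Rle_antisym; [exact Hfl | apply Hd1]).
  assert (Hre : forall k', re (hinner w (V k')) = 0).
  { intros k'. apply (quad_zero _ (hn2 (V k'))); [apply hn2_ge0|]. intros s0.
    pose proof (Hd1 (hadd l (hscal (RtoC s0) k'))) as Hh. unfold fdist in Hh.
    replace (hadd e (hopp (V (hadd l (hscal (RtoC s0) k'))))) with (hadd w (hscal (RtoC (- s0)) (V k'))) in Hh
      by (unfold w; blnorm; vext).
    rewrite hn2_addsc in Hh. lra. }
  exists l. intros k'.
  assert (Him : im (hinner w (V k')) = 0).
  { specialize (Hre (hscal (mkC 0 1) k')). rewrite bapp_scal, hinner_scalr in Hre. simpl in Hre. lra. }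
  assert (Ee : e = hadd w (V l)) by (unfold w; vext).
  rewrite Ee, hinnerDl, HV. apply Ceq; simpl; rewrite ?Hre; lra.
Qed.
End Adj.

Definition adjf {K E : Hilbert} (V : BL K E) (HV : isometry V) (e : E) : K :=
  proj1_sig (constructive_indefinite_description _ (proj_exists K E V HV e)).

Lemma adj_spec {K E : Hilbert} (V : BL K E) (HV : isometry V) e k :
  hinner (adjf V HV e) k = hinner e (V k).
Proof. unfold adjf. destruct (constructive_indefinite_description _ _); simpl; auto. Qed.

Lemma adjB_ex {K E : Hilbert} (V : BL K E) (HV : isometry V) :
  {A : BL E K | forall e k, hinner (A e) k = hinner e (V k)}.
Proof.
  unshelve refine (exist _ (Build_BL E K (adjf V HV) _ _ _) _).
  - intros x y. apply vec_ext; intro z. rewrite hinnerDl, !adj_spec, hinnerDl. reflexivity.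
  - intros a x. apply vec_ext; intro z. rewrite hinnerZl, !adj_spec, hinnerZl. reflexivity.
  - apply (mkbound _ 1); [lra|]. intros e.
    pose proof (hn2_ge0 (hadd e (hopp (V (adjf V HV e))))) as H.
    rewrite hn2_add in H. unfold hn2 in *. rewrite hinner_oppl, !hinner_oppr, HV, adj_spec in H.
    rewrite adj_spec. simpl in H. lra.
  - intros e k. simpl. apply adj_spec.
Qed.

Definition adjB {K E : Hilbert} (V : BL K E) (HV : isometry V) : BL E K := proj1_sig (adjB_ex V HV).

Lemma adjB_spec {K E : Hilbert} (V : BL K E) (HV : isometry V) e k :
  hinner (adjB V HV e) k = hinner e (V k).
Proof. unfold adjB. destruct (adjB_ex V HV); simpl; auto. Qed.

Lemma is_dsum_std (E K : Hilbert) : is_dsum (inlB E K) (inrB E K).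
Proof.
  split; [|split; [|split]].
  - intros x y; simpl; unfold dinner; simpl. rewrite hinner_0l. apply Ceq; simpl; ring.
  - intros x y; simpl; unfold dinner; simpl. rewrite hinner_0l. apply Ceq; simpl; ring.
  - intros e k; simpl; unfold dinner; simpl. rewrite hinner_0l, hinner_0r. apply Ceq; simpl; ring.
  - intros [e k]. exists e, k. simpl; unfold dadd; simpl. rewrite hadd0, haddC, hadd0. reflexivity.
Qed.

Lemma hinner_rr {E : Hilbert} (r : R) (x y : E) :
  hinner (hscal (RtoC r) x) (hscal (RtoC r) y) = Cmul (RtoC (r * r)) (hinner x y).
Proof. rewrite hinnerZl, hinner_scalr. apply Ceq; simpl; ring. Qed.

Definition splitB (E : Hilbert) (a b : R) : BL E (dsumH E E).
Proof.
  refine (Build_BL E (dsumH E E) (fun x => (hscal (RtoC a) x, hscal (RtoC b) x)) _ _ _).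
  - intros x y; simpl; unfold dadd; simpl. rewrite !hscalDr. reflexivity.
  - intros c x; simpl; unfold dscal; simpl. f_equal; vext.
  - apply (mkbound _ (a * a + b * b)); [nra|]. intros x. rewrite hn2_pair; simpl.
    rewrite !hn2_scal; simpl. lra.
Defined.

Lemma mc_convex {m} (C : graded m) : matrix_convex C ->
  forall (E : Hilbert) (A B : tuple m E) (lam : R), 0 <= lam <= 1 -> C E A -> C E B ->
  forall T : tuple m E,
  (forall l x, T l x = hadd (hscal (RtoC (1 - lam)) (A l x)) (hscal (RtoC lam) (B l x))) ->
  C E T.
Proof.
  intros [[_ Hds] Hiso] E A B lam Hlam HA HB T HT.
  set (M := fun l => blkB (A l) (zeroB E E) (zeroB E E) (B l)).
  assert (HM : C (dsumH E E) M).
  { apply (Hds E E (dsumH E E) (inlB E E) (inrB E E) (is_dsum_std E E) A B M HA HB).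
    intros l e k. simpl. unfold dadd; simpl. blnorm. rewrite !hadd0, (haddC _ hzero), hadd0.
    reflexivity. }
  set (a := sqrt (1 - lam)). set (b := sqrt lam).
  assert (Ha : a * a = 1 - lam) by (apply sqrt_sqrt; lra).
  assert (Hb : b * b = lam) by (apply sqrt_sqrt; lra).
  clearbody a b.
  assert (Hiw : isometry (splitB E a b)).
  { intros x y; simpl; unfold dinner; simpl. rewrite !hinner_rr, Ha, Hb. apply Ceq; simpl; ring. }
  apply (Hiso (dsumH E E) E (splitB E a b) Hiw M T HM).
  intros l k k'. rewrite HT. simpl; unfold dinner; simpl. blnorm.
  rewrite hadd0, (haddC _ hzero), hadd0, !hinner_rr, hinnerDl, !hinnerZl, Ha, Hb.
  apply Ceq; simpl; ring.
Qed.

Ltac dsimpl := simpl; unfold dinner, dadd, dscal, dopp, dzero; simpl.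

Ltac fnorm := repeat first [rewrite hinnerDl | rewrite hinnerZl | rewrite hinner_oppl | rewrite hinner_0l
  | rewrite hinner_addr | rewrite hinner_scalr | rewrite hinner_oppr | rewrite hinner_0r].

Lemma hopp_zero {E : Hilbert} : hopp (@hzero E) = hzero.
Proof. vext. Qed.

Definition sndB (E K : Hilbert) : BL (dsumH E K) K.
Proof.
  refine (Build_BL (dsumH E K) K (fun p => snd p) _ _ _); try reflexivity.
  apply (mkbound _ 1); [lra|]. intros [a b]. rewrite hn2_pair. simpl. pose proof (hn2_ge0 a). lra.
Defined.

Section Dil.
Variables (K E : Hilbert) (V : BL K E).
Hypothesis HV : isometry V.
Local Notation Vs := (adjB V HV).

Lemma VsV k : Vs (V k) = k.
Proof. apply vec_ext; intro z. rewrite adjB_spec, HV. reflexivity. Qed.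

Lemma adjr x y : hinner x (Vs y) = hinner (V x) y.
Proof. rewrite (hinner_sym _ (Vs y) x). rewrite adjB_spec, <- hinner_sym. reflexivity. Qed.

Lemma Psym e x : hinner (V (Vs e)) x = hinner e (V (Vs x)).
Proof.
  rewrite <- (adjB_spec V HV e). rewrite (hinner_sym _ x).
  rewrite <- (adjB_spec V HV x). rewrite <- hinner_sym. reflexivity.
Qed.

Ltac anorm := repeat first [rewrite hinnerDl | rewrite hinnerZl | rewrite hinner_oppl | rewrite hinner_0l
  | rewrite hinner_addr | rewrite hinner_scalr | rewrite hinner_oppr | rewrite hinner_0r
  | rewrite HV | rewrite Psym | rewrite adjr | rewrite (adjB_spec V HV)].

Definition Pc : BL E E := lincombB 1 (idB E) (-1) (compB V Vs).

Definition U : BL (dsumH K E) (dsumH E K) := blkB V Pc (zeroB K K) Vs.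
Definition Uinv : BL (dsumH E K) (dsumH K E) := blkB Vs (zeroB K K) Pc V.

Lemma U_Uinv g : U (Uinv g) = g.
Proof.
  destruct g as [e k]. dsimpl. blnorm. rewrite ?VsV. blnorm. rewrite ?VsV.
  apply (f_equal2 (@pair _ _)). apply vec_ext; intro; vnorm. apply Ceq; simpl. ring. ring. vext.
Qed.

Lemma U_iso : isometry U.
Proof.
  intros [k e] [k' e']. dsimpl. blnorm. anorm. apply Ceq; simpl; ring.
Qed.
End Dil.

Definition Rf (K E : Hilbert) : BL (dsumH K E) (dsumH K E) := blkB (idB K) (zeroB E K) (zeroB K E) (oppB E).

Lemma Rf_inv (K E : Hilbert) g : Rf K E (Rf K E g) = g.
Proof. destruct g as [k e]. dsimpl. blnorm. apply (f_equal2 (@pair _ _)); vext. Qed.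

Lemma Rf_iso (K E : Hilbert) : isometry (Rf K E).
Proof. intros [k e] [k' e']. dsimpl. fnorm. apply Ceq; simpl; ring. Qed.

Lemma compress_inv {m} {K E : Hilbert} (W : BL K E) (Wi : BL E K) : isometry W ->
  (forall g, W (Wi g) = g) -> forall (X : tuple m E),
  compress W X (fun l => compB Wi (compB (X l) W)).
Proof. intros HW HWi X l k k'. simpl. rewrite <- (HW (Wi _) k'), HWi. reflexivity. Qed.

Lemma unitary_inv {K E : Hilbert} (W : BL K E) (Wi : BL E K) : isometry W ->
  (forall g, W (Wi g) = g) -> unitary W.
Proof. intros HW HWi. split; auto. intros y. exists (Wi y). auto. Qed.

Lemma inner_dsum {E K G : Hilbert} (i : BL E G) (j : BL K G) : is_dsum i j ->
  forall a b e k, hinner (hadd (i a) (j b)) (hadd (i e) (j k)) = Cadd (hinner a e) (hinner b k).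
Proof.
  intros (Hi & Hj & Ho & _) a b e k.
  rewrite hinnerDl, !hinner_addr, Hi, Hj, Ho, (hinner_sym _ (i e) (j b)), Ho.
  apply Ceq; simpl; ring.
Qed.

Ltac anormV V HV := repeat first [rewrite hinnerDl | rewrite hinnerZl | rewrite hinner_oppl | rewrite hinner_0l
  | rewrite hinner_addr | rewrite hinner_scalr | rewrite hinner_oppr | rewrite hinner_0r
  | rewrite HV | rewrite (Psym _ _ V HV) | rewrite (adjr _ _ V HV) | rewrite (adjB_spec V HV)].

Lemma dsum_op_l {E K : Hilbert} (A : BL E E) (B : BL K K) (Tm : BL (dsumH E K) (dsumH E K)) :
  dsum_op (inlB E K) (inrB E K) A B Tm -> forall a,
  hinner (Tm ((a, hzero) : dsumH E K)) ((a, hzero) : dsumH E K) = hinner (A a) a.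
Proof.
  intros H a.
  assert (Ea : ((a, hzero) : dsumH E K) = hadd (inlB E K a) (inrB E K hzero))
    by (dsimpl; rewrite hadd0, hadd0; reflexivity).
  rewrite Ea at 1. rewrite H. dsimpl. blnorm. fnorm. apply Ceq; simpl; ring.
Qed.

Lemma Uo_x (K E : Hilbert) (V : BL K E) (HV : isometry V) (x : K) :
  U K E V HV ((x, hzero) : dsumH K E) = ((V x, hzero) : dsumH E K).
Proof. dsimpl. blnorm. apply (f_equal2 (@pair _ _)); vext. Qed.

Lemma Ro_x (K E : Hilbert) (x : K) :
  Rf K E ((x, hzero) : dsumH K E) = ((x, hzero) : dsumH K E).
Proof. dsimpl. blnorm. apply (f_equal2 (@pair _ _)); vext. Qed.

Lemma pair_fst0 {E K : Hilbert} (p : dsumH K E) : fst p = hzero -> p = ((hzero, snd p) : dsumH K E).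
Proof. destruct p; simpl; intros ->; reflexivity. Qed.

Section Main.
Variables (k : nat) (D : graded k) (F : forall E : Hilbert, tuple k E -> BL E E).

Lemma hypo_dsum : matrix_convex D -> free_function D F ->
  forall (E K G : Hilbert) (i : BL E G) (j : BL K G), is_dsum i j ->
  forall X Y T, hypo_Re D F E X -> hypo_Re D F K Y -> dsum_tuple i j X Y T -> hypo_Re D F G T.
Proof.
  intros [[_ Hds] _] [_ Fds] E K G i j Hij X Y T [HXD HXle] [HYD HYle] HT.
  assert (HTD : D G (fun l => T (Fin.FS l))).
  { apply (Hds E K G i j Hij (fun l => X (Fin.FS l)) (fun l => Y (Fin.FS l))); auto.
    intros l; apply HT. }
  split; auto. intros g.
  pose proof (Fds E K G i j Hij _ _ _ HXD HYD (fun l => HT (Fin.FS l))) as HF.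
  pose proof Hij as Hij'.
  destruct Hij as (Hi & Hj & Ho & Hsp). destruct (Hsp g) as (e & k0 & ->).
  rewrite (HT Fin.F1 e k0), HF, !(inner_dsum i j Hij').
  simpl. specialize (HXle e). specialize (HYle k0). lra.
Qed.

Lemma hypo_iso : matrix_convex D -> closed_reducing D -> free_function D F -> real_operator_concave D F ->
  forall (E K : Hilbert) (V : BL K E), isometry V ->
  forall X T, hypo_Re D F E X -> compress V X T -> hypo_Re D F K T.
Proof.
  intros HmcD HcrD HFF Hconc E K V HV X T [HXD HXle] HT.
  pose proof HmcD as [[HuD HdsD] HisoD]. pose proof HFF as [Fu Fds].
  set (X' := fun l => X (Fin.FS l)) in *. set (T' := fun l => T (Fin.FS l)).
  assert (HT'D : D K T') by (apply (HisoD E K V HV X' T' HXD); intros l; apply HT).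
  split; [exact HT'D|].
  set (M := fun l => blkB (X' l) (zeroB K E) (zeroB E K) (T' l)).
  assert (HMds : dsum_tuple (inlB E K) (inrB E K) X' T' M).
  { intros l e k0. simpl. unfold dadd; simpl. blnorm. rewrite !hadd0, (haddC _ hzero), hadd0.
    reflexivity. }
  assert (HMD : D (dsumH E K) M) by (apply (HdsD E K _ _ _ (is_dsum_std E K) X' T' M HXD HT'D HMds)).
  set (Uo := U K E V HV). set (Ui := Uinv K E V HV).
  assert (HUi := U_Uinv K E V HV). assert (HUiso := U_iso K E V HV).
  set (Y := fun l => compB Ui (compB (M l) Uo)).
  assert (HYc : compress Uo M Y) by (apply compress_inv; auto).
  assert (HUu : unitary Uo) by (apply (unitary_inv Uo Ui); auto).
  assert (HYD : D (dsumH K E) Y) by (apply (HuD _ _ Uo HUu M Y HMD HYc)).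
  set (Ro := Rf K E).
  set (Y2 := fun l => compB Ro (compB (Y l) Ro)).
  assert (HY2c : compress Ro Y Y2) by (apply compress_inv; [apply Rf_iso | apply Rf_inv]).
  assert (HRu : unitary Ro) by (apply (unitary_inv Ro Ro); [apply Rf_iso | apply Rf_inv]).
  assert (HY2D : D (dsumH K E) Y2) by (apply (HuD _ _ Ro HRu Y Y2 HYD HY2c)).
  set (Tt := fun l => lincombB (1 - /2) (Y l) (/2) (Y2 l)).
  assert (HTtD : D (dsumH K E) Tt).
  { apply (mc_convex D HmcD _ Y Y2 (/2)); auto. lra. }
  assert (Kc1 : forall l (x : K), Tt l ((x, hzero) : dsumH K E) = ((T' l x, hzero) : dsumH K E)).
  { intros l x. unfold Tt, Y2, Y, M, Uo, Ui, Ro, T', X'. dsimpl. blnorm.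
    apply (f_equal2 (@pair _ _)).
    - apply vec_ext; intro z. rewrite (HT (Fin.FS l) x z). anormV V HV. apply Ceq; simpl; field.
    - vext. }
  assert (Kc2 : forall l (e : E), fst (Tt l ((hzero, e) : dsumH K E)) = hzero).
  { intros l e. unfold Tt, Y2, Y, M, Uo, Ui, Ro, T', X'. dsimpl. blnorm. vext. }
  set (Q := fun l => compB (sndB K E) (compB (Tt l) (inrB K E))).
  assert (KQ : forall l e, Tt l (inrB K E e) = inrB K E (Q l e)).
  { intros l e. change (inrB K E e) with ((hzero, e) : dsumH K E).
    rewrite (pair_fst0 (Tt l ((hzero, e) : dsumH K E)) (Kc2 l e)). reflexivity. }
  assert (HinrI : isometry (inrB K E)) by apply (is_dsum_std K E).
  assert (HQD : D E Q).
  { apply (HcrD (dsumH K E) E (inrB K E) HinrI Tt HTtD).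
    - intros l n. exists (Q l n). apply KQ.
    - intros l [a b] Hperp n.
      assert (Hb : b = hzero).
      { specialize (Hperp b). simpl in Hperp. unfold dinner in Hperp; simpl in Hperp.
        rewrite hinner_0r in Hperp. apply hinner_def. rewrite <- Hperp. apply Ceq; simpl; ring. }
      subst b. rewrite Kc1. dsimpl. rewrite hinner_0r, hinner_0l. apply Ceq; simpl; ring.
    - intros l n. symmetry. apply KQ. }
  assert (HTtds : dsum_tuple (inlB K E) (inrB K E) T' Q Tt).
  { intros l x e. rewrite bapp_add, KQ. change (inlB K E x) with ((x, hzero) : dsumH K E).
    rewrite Kc1. reflexivity. }
  pose proof (Fds _ _ _ _ _ (is_dsum_std K E) T' Q Tt HT'D HQD HTtds) as HFTt.
  pose proof (Fds _ _ _ _ _ (is_dsum_std E K) X' T' M HXD HT'D HMds) as HFM.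
  pose proof (Fu _ _ Uo HUu M Y HMD HYc) as HFY.
  pose proof (Fu _ _ Ro HRu Y Y2 HYD HY2c) as HFY2.
  set (Sop := lincombB (1 - /2) (F _ Y) (/2) (F _ Y2)).
  assert (Hlam : 0 <= /2 <= 1) by lra.
  pose proof (Hconc (dsumH K E) Y Y2 (/2) Hlam HYD HY2D Tt (fun l x => eq_refl) Sop (fun x => eq_refl)) as Hle.
  intros x.
  rewrite (HT Fin.F1 x x).
  eapply Rle_trans; [apply HXle|].
  specialize (Hle ((x, hzero) : dsumH K E)).
  change (Sop ((x, hzero) : dsumH K E)) with
    (hadd (hscal (RtoC (1 - /2)) (F _ Y ((x, hzero) : dsumH K E))) (hscal (RtoC (/2)) (F _ Y2 ((x, hzero) : dsumH K E)))) in Hle.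
  rewrite hinnerDl, !hinnerZl, HFY2 in Hle. unfold Ro in Hle. rewrite Ro_x, HFY in Hle.
  unfold Uo in Hle. rewrite Uo_x, (dsum_op_l _ _ _ HFM) in Hle.
  rewrite (dsum_op_l _ _ _ HFTt) in Hle. simpl in Hle. unfold T' in Hle. lra.
Qed.
End Main.

Definition tcons {m} {E : Hilbert} (a : BL E E) (t : tuple m E) : tuple (S m) E :=
  fun i => Fin.caseS' i (fun _ => BL E E) a t.

Theorem mainTheorem6 (k : nat) (D : graded k)
  (F : forall E : Hilbert, tuple k E -> BL E E) :
  matrix_convex D -> closed_reducing D -> free_function D F ->
  (matrix_convex (hypo_Re D F) <-> real_operator_concave D F).
Proof.
  intros HmcD HcrD HFF. split.
  - intros Hhyp E A B lam Hlam HA HB T HT Sx HS.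
    assert (H : hypo_Re D F E (tcons Sx T)).
    { apply (mc_convex (hypo_Re D F) Hhyp E (tcons (F E A) A) (tcons (F E B) B) lam Hlam).
      - split; [exact HA | intros x; apply Rle_refl].
      - split; [exact HB | intros x; apply Rle_refl].
      - intros i x.
        apply (Fin.caseS' i (fun i => tcons Sx T i x = hadd (hscal (RtoC (1 - lam)) (tcons (F E A) A i x)) (hscal (RtoC lam) (tcons (F E B) B i x)))); simpl; auto. }
    destruct H as [_ H]. exact H.
  - intros Hconc. split; [split|].
    + intros E K U0 [HU0 _] X T HX HT. exact (hypo_iso k D F HmcD HcrD HFF Hconc E K U0 HU0 X T HX HT).
    + exact (hypo_dsum k D F HmcD HFF).
    + exact (hypo_iso k D F HmcD HcrD HFF Hconc).
Qed.
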